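(* Let $\mathbb{S}=(S,\Sigma,\{\tau_a\mid a\in L\})$ be an LMP, let $\Sigma_0\subseteq\Sigma$ be a sub-$\sigma$-algebra with $\mathcal{R}(\Sigma_0)=\mathcal{R}^T(\Sigma_0)$, and put $R_0=\mathcal{R}(\Sigma_0)$. Then for every limit ordinal $\lambda$, $\mathcal{R}(\Sigma_\lambda)=\mathcal{R}^T(\Sigma_\lambda)$.
   Context: An LMP is a triple $(S,\Sigma,\{\tau_a\mid a\in L\})$ with $(S,\Sigma)$ a measurable space, $L$ countable, and each $\tau_a:S\times\Sigma\to[0,1]$ a Markov kernel (subprobability measure in the second argument, measurable in the first). For $R\subseteq S\times S$, $A$ is $R$-closed if $x\in A$, $xRs$ imply $s\in A$; $\Sigma(R)$ is the family of $R$-closed members of $\Sigma$. For $\Gamma\subseteq\mathcal{P}(S)$, $\mathcal{R}(\Gamma)=\{(s,t):\forall A\in\Gamma\,(s\in A\iff t\in A)\}$; for $\Lambda\subseteq\Sigma$, $\mathcal{R}^T(\Lambda)=\{(s,t):\forall a\in L\,\forall E\in\Lambda\ \tau_a(s,E)=\tau_a(t,E)\}$. $\mathcal{O}(R)=\mathcal{R}^T(\Sigma(R))$, $\mathcal{G}(\Lambda)=\Sigma(\mathcal{R}^T(\Lambda))$. Iterates: $R_{\alpha+1}=\mathcal{O}(R_\alpha)$, $R_\lambda=\bigcap_{\alpha<\lambda}R_\alpha$ for limit $\lambda$; $\Sigma_{\alpha+1}=\mathcal{G}(\Sigma_\alpha)$, $\Sigma_\lambda=\sigma(\bigcup_{\alpha<\lambda}\Sigma_\alpha)$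 for limit $\lambda$. *)

(* Defs.v *)
From HB Require Import structures.
From mathcomp Require Import all_boot all_order all_algebra.
From mathcomp Require Import all_classical all_reals all_analysis.
From Stdlib Require Import Relations Wellfounded.
Set Implicit Arguments. Unset Strict Implicit. Unset Printing Implicit Defensive.
Import Order.TTheory GRing.Theory Num.Theory.
Local Open Scope classical_set_scope.
Local Open Scope ring_scope.

(* An LMP on a measurable space T with countable label set L:
   a family of subprobability (Markov) kernels tau a : T ~> T. *)
Definition LMP (d : measure_display) (T : measurableType d) (R : realType)
  (L : countType) := L -> R.-spker T ~> T.

Definition rel_closed (T : Type) (Rel : T -> T -> Prop) (A : set T) : Prop :=
  forall x s, A x -> Rel x s -> A s.

Definition closed_measurables d (T : measurableType d) (Rel : T -> T -> Prop)
  : set (set T) := [set A | measurable A /\ rel_closed Rel A].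

Definition relR (T : Type) (Gamma : set (set T)) : T -> T -> Prop :=
  fun s t => forall A, Gamma A -> (A s <-> A t).

Definition relRT d (T : measurableType d) (R : realType) (L : countType)
  (tau : LMP T R L) (Lambda : set (set T)) : T -> T -> Prop :=
  fun s t => forall a E, Lambda E -> tau a s E = tau a t E.

Definition opG d (T : measurableType d) (R : realType) (L : countType)
  (tau : LMP T R L) (Lambda : set (set T)) : set (set T) :=
  closed_measurables (relRT tau Lambda).

(* Ordinals are represented by elements of an arbitrary strict well-order. *)
Definition strict_wellorder (W : Type) (lt : W -> W -> Prop) : Prop :=
  (forall x y z, lt x y -> lt y z -> lt x z) /\
  (forall x y, lt x y \/ x = y \/ lt y x) /\
  well_founded lt.

Definition is_zero (W : Type) (lt : W -> W -> Prop) (w : W) : Prop :=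
  forall v, ~ lt v w.

Definition is_succ_of (W : Type) (lt : W -> W -> Prop) (v w : W) : Prop :=
  lt v w /\ forall u, ~ (lt v u /\ lt u w).

Definition is_limit (W : Type) (lt : W -> W -> Prop) (w : W) : Prop :=
  ~ is_zero lt w /\ forall v, ~ is_succ_of lt v w.

Definition sigma_hierarchy d (T : measurableType d) (R : realType)
  (L : countType) (tau : LMP T R L) (Sigma0 : set (set T))
  (W : Type) (lt : W -> W -> Prop) (Sig : W -> set (set T)) : Prop :=
  (forall w, is_zero lt w -> Sig w = Sigma0) /\
  (forall v w, is_succ_of lt v w -> Sig w = opG tau (Sig v)) /\
  (forall w, is_limit lt w ->
     Sig w = <<s \bigcup_(v in [set v | lt v w]) Sig v >>).

(* Main.v *)
Require Import Defs.
From HB Require Import structures.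
From mathcomp Require Import all_boot all_order all_algebra.
From mathcomp Require Import all_classical all_reals all_analysis.
Local Open Scope classical_set_scope.

Lemma wf_min (W : Type) (lt : W -> W -> Prop) (hwf : well_founded lt)
  (P : W -> Prop) x : P x -> exists m, P m /\ forall y, lt y m -> ~ P y.
Proof.
induction x as [x IH] using (well_founded_ind hwf) => Px.
have [[y [ylt Py]]|N] := pselect (exists y, lt y x /\ P y).
  exact: (IH y ylt Py).
exists x; split => // y ylt Py; apply: N; by exists y.
Qed.

Lemma relRT_anti d (T : measurableType d) (R : realType) (L : countType)
  (tau : LMP T R L) (A B : set (set T)) :
  A `<=` B -> forall s t, relRT tau B s t -> relRT tau A s t.
Proof. by move=> AB s t h a E /AB; exact: h. Qed.

Lemma relRT_sym d (T : measurableType d) (R : realType) (L : countType)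
  (tau : LMP T R L) (A : set (set T)) s t :
  relRT tau A s t -> relRT tau A t s.
Proof. by move=> h a E /h ->. Qed.

Lemma closed_sigma (T : Type) (Rel : T -> T -> Prop)
  (hsym : forall s t, Rel s t -> Rel t s) :
  sigma_algebra setT [set A | rel_closed Rel A].
Proof.
split.
- by move=> x s.
- move=> A hA x s [_ nAx] xs; split => // As; apply: nAx; exact: (hA s x As (hsym _ _ xs)).
- move=> F hF x s [n _ Fx] xs; exists n => //; exact: (hF n x s Fx xs).
Qed.

Lemma opG_sigma d (T : measurableType d) (R : realType) (L : countType)
  (tau : LMP T R L) (A : set (set T)) :
  sigma_algebra setT (opG tau A) /\ opG tau A `<=` measurable.
Proof.
split; last by move=> B [].
have [h0 hC hU] := @closed_sigma _ _ (@relRT_sym d T R L tau A).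
split.
- by split => //; exact: h0.
- move=> B [mB cB]; split; first exact: measurableD.
  exact: hC.
- move=> F hF; split; first by apply: bigcup_measurable => n _; case: (hF n).
  by apply: hU => n; case: (hF n).
Qed.

Lemma sa_setI T (G : set (set T)) : sigma_algebra setT G -> setI_closed G.
Proof.
case=> h0 hC hU A B GA GB.
have -> : A `&` B = setT `\` \bigcup_k (if k is 0 then setT `\` A else setT `\` B).
  apply/seteqP; split => x.
  - move=> [Ax Bx]; split => // -[[|k] _ /= [_ N]]; [exact: N Ax|exact: N Bx].
  - move=> [_ N]; split; apply: contrapT => nx; apply: N; [exists 0%N | exists 1%N] => //.
apply: (hC); apply: (hU) => -[|k]; exact: (hC).
Qed.

Definition Inv d (T : measurableType d) (R : realType) (L : countType)
  (tau : LMP T R L) (W : Type) (lt : W -> W -> Prop) (Sig : W -> set (set T))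
  (w : W) : Prop :=
  [/\ Sig w `<=` measurable, sigma_algebra setT (Sig w),
      (forall v, lt v w -> Sig v `<=` Sig w) &
      (forall A, Sig w A -> rel_closed (relRT tau (Sig w)) A)].

Arguments sa_setI {T G} _ _ _ _ _.
Arguments Inv {d T R L} tau {W} lt Sig w.
Arguments relRT_anti {d T R L tau A B} _ {s t} _.
Arguments relRT_sym {d T R L tau A s t} _.
Arguments opG_sigma {d T R L} tau A.

Lemma inv_all d (T : measurableType d)
  (R : realType) (L : countType) (tau : LMP T R L)
  (Sigma0 : set (set T))
  (hS0 : sigma_algebra setT Sigma0)
  (hS0sub : Sigma0 `<=` measurable)
  (hR0 : relR Sigma0 = relRT tau Sigma0)
  (W : Type) (lt : W -> W -> Prop) (hW : strict_wellorder lt)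
  (Sig : W -> set (set T)) (hSig : sigma_hierarchy tau Sigma0 lt Sig) :
  forall w, Inv tau lt Sig w.
Proof.
have [htr [htri hwf]] := hW.
have [hz [hs hl]] := hSig.
move=> w; induction w as [w IH] using (well_founded_ind hwf).
have [wz|nz] := pselect (is_zero lt w).
  rewrite /Inv (hz w wz); split => //.
  - by move=> v /wz.
  - move=> A SA x s Ax xs; rewrite -hR0 in xs; exact: (proj1 (xs A SA)).
have [[v vw]|ns] := pselect (exists v, is_succ_of lt v w).
  have [IHm IHs IHmon IHc] := IH v vw.1.
  have SvG : Sig v `<=` opG tau (Sig v).
    move=> A SA; split; [exact: IHm|exact: IHc].
  rewrite /Inv (hs v w vw); have [sG mG] := opG_sigma tau (Sig v).
  split => //.
  - move=> u uw; case: (htri u v) => [uv|[->//|vu]].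
      exact: (subset_trans (IHmon u uv) SvG).
    by exfalso; apply: (vw.2 u).
  - move=> A [_ cA] x s Ax xs; apply: (cA x s Ax).
    exact: (relRT_anti SvG xs).
have wl : is_limit lt w by split => // v vs; apply: ns; exists v.
set U := \bigcup_(v in [set v | lt v w]) Sig v.
have Usub : forall v, lt v w -> Sig v `<=` Sig w.
  move=> v vw A SA; rewrite (hl w wl); apply: sub_gen_smallest.
  by exists v.
rewrite /Inv; split => //.
- rewrite (hl w wl); apply: smallest_sub; first exact: sigma_algebra_measurable.
  move=> A [v vw SA]; have [IHm _ _ _] := IH v vw; exact: IHm.
- rewrite (hl w wl); exact: smallest_sigma_algebra.
- move=> A SA.
  have : <<s U >> A by rewrite -(hl w wl).
  have : <<s U >> `<=` [set A | rel_closed (relRT tau (Sig w)) A].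
    apply: smallest_sub; first by apply: closed_sigma => ? ?; exact: relRT_sym.
    move=> B [v vw SB] x s Bx xs; have [_ _ _ IHc] := IH v vw.
    exact: (IHc B SB x s Bx (relRT_anti (Usub v vw) xs)).
  by move=> h /h.
Qed.

Theorem proposition3p9 (d : measure_display) (T : measurableType d)
  (R : realType) (L : countType) (tau : LMP T R L)
  (Sigma0 : set (set T))
  (hS0 : sigma_algebra setT Sigma0)
  (hS0sub : Sigma0 `<=` measurable)
  (hR0 : relR Sigma0 = relRT tau Sigma0)
  (W : Type) (lt : W -> W -> Prop) (hW : strict_wellorder lt)
  (Sig : W -> set (set T)) (hSig : sigma_hierarchy tau Sigma0 lt Sig)
  (lam : W) (hlam : is_limit lt lam) :
  relR (Sig lam) = relRT tau (Sig lam).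
Proof.
have Inv := @inv_all d T R L tau Sigma0 hS0 hS0sub hR0 W lt hW Sig hSig.
have [htr [htri hwf]] := hW.
have [hz [hs hl]] := hSig.
have Usub : forall v, lt v lam -> Sig v `<=` Sig lam.
  move=> v vw A SA; rewrite (hl lam hlam); apply: sub_gen_smallest.
  by exists v.
apply/funext => s; apply/funext => t; apply/propext; split; last first.
  move=> h A SA; have [_ _ _ c] := Inv lam; split => Ax.
    exact: (c A SA s t Ax h).
  exact: (c A SA t s Ax (relRT_sym h)).
move=> h a E SE.
rewrite (hl lam hlam) in SE.
refine (@g_sigma_algebra_measure_unique d R T
  (\bigcup_(v in [set v | lt v lam]) Sig v) _ (fun=> setT) _ _
  (tau a s) (tau a t) _ _ _ E SE).
- by move=> A [v vw SA]; have [m _ _ _] := Inv v; exact: m.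
- move=> _; have [v vl] : exists v, lt v lam.
    apply: contrapT => N; apply: hlam.1 => v vl; apply: N; by exists v.
  exists v => //; have [_ [s0 sC _] _ _] := Inv v.
  by have := sC _ s0; rewrite setD0.
- by rewrite bigcup_const.
- move=> A B [v vl SA] [w wl SB].
  case: (htri v w) => [vw|[vw|wv]].
  + exists w; first exact: wl; have [_ sw mon _] := Inv w.
    exact: (sa_setI sw _ _ (mon _ vw _ SA) SB).
  + rewrite -vw in SB; exists v; first exact: vl; have [_ sw _ _] := Inv v.
    exact: (sa_setI sw _ _ SA SB).
  + exists v; first exact: vl; have [_ sw mon _] := Inv v.
    exact: (sa_setI sw _ _ SA (mon _ wv _ SB)).
- move=> A [v vl SA].
  have [u0 Pu0] : exists u0, lt v u0 /\ lt u0 lam.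
    apply: contrapT => N; apply: (hlam.2 v); split => // u Pu; apply: N; by exists u.
  have [u [[vu ul] umin]] := @wf_min W lt hwf (fun u => lt v u /\ lt u lam) u0 Pu0.
  have vsu : is_succ_of lt v u.
    split => // x [vx xu]; apply: (umin x xu); split => //; exact: htr ul.
  have [mv _ _ _] := Inv v.
  pose B := [set x | tau a x A = tau a s A].
  have SuB : Sig u B.
    rewrite (hs v u vsu); split.
      have := measurable_kernel (tau a) A (mv _ SA) measurableT [set tau a s A].
      by rewrite setTI; apply.
    move=> x y Bx xy; rewrite /B /= -Bx; apply/esym; exact: xy.
  have : B t by apply/(h B (Usub u ul B SuB)).
  by rewrite /B /= => ->.
- move=> _; apply: (Order.POrderTheory.le_lt_trans (sprob_kernel_le1 _ _)); exact: ltey.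
Qed.
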